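(* Consider the car-following system with state $x=(D,v,v_{\rm L})\in\mathbb{R}^3$: $$\dot D = v_{\rm L}-v,\qquad \dot v = u - p(v),\qquad \dot v_{\rm L} = a_{\rm L}.$$ Here $p$ is locally Lipschitz with $p(v)\ge 0$, and $a_{\rm L}$ is the leader's acceleration, treated as a given exogenous input. The system is driven by the connected cruise controller $$u = k_{\rm d}(x) = A\big(V(D)-v\big) + B\big(W(v_{\rm L})-v\big) + C a_{\rm L}$$ with $A,B\ge 0$ and $C=0$, where $$V(D)=\min\{\kappa(D-D_{\rm st}),v_{\rm max}\}, \qquad W(v_{\rm L})=\min\{v_{\rm L},v_{\rm max}\}.$$ The constants satisfy $\kappa>0$, $v_{\rm max}>0$ and $D_{\rm st}\in\mathbb{R}$. Let $D_{\rm sf}\in\mathbb{R}$ and $T_{\rm h}>0$, and set $\bar\kappa = 1/T_{\rm h}$. Define $$h_{\rm TH}(x) = \bar\kappa(D-D_{\rm sf}) - v, \qquad \mathcal{S}_{\rm TH}=\{x: h_{\rm TH}(x)\ge0\} = \{x: D\ge D_{\rm sf}+T_{\rm h}v\}.$$ Then the closed loop is safe with respect to $\mathcal{S}_{\rm TH}$, in the sense that every solution with $x(0)\in\mathcal{S}_{\rm TH}$ satisfies $x(t)\in\mathcal{S}_{\rm TH}$ for all $t\ge0$, in either of the following two cases: (i) $v(t)\ge 0$ along the solution, $D_{\rm st}\ge D_{\rm sf}$, and $B=\bar\kappa\ge\kappa$; or (ii) there is $\bar v\ge 0$ such that $v(t),v_{\rm L}(t)\in[0,\bar v]$ along the solution,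 $D_{\rm st}>D_{\rm sf}$, $\bar\kappa\ge\kappa$, and $$A \ \ge\ \frac{|\bar\kappa - B|\,\bar v}{\kappa\,(D_{\rm st}-D_{\rm sf})}.$$
   Context: Standing assumption: solutions of the closed loop system exist and are unique for all $t\ge 0$. *)

(* Defs.v *)
From Stdlib Require Import Reals.
From Coquelicot Require Import Coquelicot.
Open Scope R_scope.

Definition locally_lipschitz (p : R -> R) : Prop :=
  forall x : R, exists delta : R, exists L : R, 0 < delta /\
    forall y z : R, Rabs (y - x) < delta -> Rabs (z - x) < delta ->
      Rabs (p y - p z) <= L * Rabs (y - z).

Definition Vpol (kappa Dst vmax D : R) : R := Rmin (kappa * (D - Dst)) vmax.
Definition Wpol (vmax vL : R) : R := Rmin vL vmax.

Definition kd (A B C kappa Dst vmax D v vL aL : R) : R :=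
  A * (Vpol kappa Dst vmax D - v) + B * (Wpol vmax vL - v) + C * aL.

Definition hTH (Th Dsf D v : R) : R := (/ Th) * (D - Dsf) - v.

Definition closed_loop_solution (p aL : R -> R) (A B C kappa Dst vmax : R)
    (D v vL : R -> R) : Prop :=
  (forall t, 0 < t -> is_derive D t (vL t - v t)) /\
  (forall t, 0 < t ->
      is_derive v t (kd A B C kappa Dst vmax (D t) (v t) (vL t) (aL t) - p (v t))) /\
  (forall t, 0 < t -> is_derive vL t (aL t)) /\
  filterlim D (at_right 0) (locally (D 0)) /\
  filterlim v (at_right 0) (locally (v 0)) /\
  filterlim vL (at_right 0) (locally (vL 0)).

(* Main.v *)
Require Import Defs.
From Stdlib Require Import Reals.
From Coquelicot Require Import Coquelicot.
From Stdlib Require Import Lra Psatz Classical.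
Open Scope R_scope.

Lemma cont_eps (f : R -> R) (t l : R) : is_derive f t l ->
  forall eps, 0 < eps -> exists delta, 0 < delta /\
    forall s, Rabs (s - t) < delta -> Rabs (f s - f t) < eps.
Proof.
  intros Hd eps He.
  assert (Hc : continuity_pt f t).
  { apply continuity_pt_filterlim. apply (ex_derive_continuous f t). exists l; exact Hd. }
  destruct (Hc eps He) as [d [Hd0 Hd1]].
  exists d; split; [lra|]. intros s Hs.
  destruct (Req_dec s t) as [->|Hne].
  - unfold Rminus; rewrite Rplus_opp_r, Rabs_R0; lra.
  - apply (Hd1 s). split; [split; [exact I| congruence] | exact Hs].
Qed.

Lemma rcont_eps (f : R -> R) : filterlim f (at_right 0) (locally (f 0)) ->
  forall eps, 0 < eps -> exists delta, 0 < delta /\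
    forall s, 0 < s < delta -> Rabs (f s - f 0) < eps.
Proof.
  intros Hf eps He.
  specialize (Hf _ (locally_ball (f 0) (mkposreal eps He))).
  destruct Hf as [d Hd].
  exists d; split; [apply cond_pos|]. intros s [Hs1 Hs2].
  assert (Hb : ball 0 d s).
  { unfold ball; simpl; unfold AbsRing_ball, abs, minus, plus, opp; simpl.
    rewrite Rabs_right; lra. }
  specialize (Hd s Hb Hs1).
  unfold ball in Hd; simpl in Hd; unfold AbsRing_ball, abs, minus, plus, opp in Hd; simpl in Hd.
  exact Hd.
Qed.

Lemma barrier (h h' : R -> R) :
  (forall t, 0 < t -> is_derive h t (h' t)) ->
  (forall t, 0 < t -> h t < 0 -> 0 <= h' t) ->
  (forall eps, 0 < eps -> exists delta, 0 < delta /\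
     forall s, 0 < s < delta -> Rabs (h s - h 0) < eps) ->
  0 <= h 0 -> forall t, 0 <= t -> 0 <= h t.
Proof.
  intros Hd Hpos Hr0 H0 t Ht.
  destruct (Rle_lt_dec 0 (h t)) as [|Hneg]; [assumption|exfalso].
  assert (Htp : 0 < t).
  { destruct Ht as [| <-]; [assumption| lra]. }
  set (E := fun s => 0 <= s <= t /\ 0 <= h s).
  assert (Hb : bound E). { exists t. intros s [Hs _]. lra. }
  assert (HE0 : exists x, E x). { exists 0. split; lra. }
  destruct (completeness E Hb HE0) as [t0 [Hub Hlub]].
  assert (Ht00 : 0 <= t0). { apply Hub. split; lra. }
  assert (Ht0t : t0 <= t). { apply Hlub. intros s [Hs _]. lra. }
  set (eps := - h t / 2).
  assert (Heps : 0 < eps) by (unfold eps; lra).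
  assert (Hs' : exists s', t0 < s' < t /\ h t < h s').
  { destruct Ht00 as [Ht0p| <-].
    - destruct (cont_eps h t0 (h' t0) (Hd t0 Ht0p) eps Heps) as [d [Hd0 Hd1]].
      assert (Hnear : h t0 > - eps).
      { destruct (classic (exists s, E s /\ t0 - d < s)) as [[s [Es Hs]]|Hno].
        - assert (s <= t0) by (apply Hub; exact Es).
          assert (HH : Rabs (h s - h t0) < eps) by (apply Hd1; rewrite Rabs_left1; lra).
          destruct Es as [_ Es].
          apply Rabs_def2 in HH. lra.
        - assert (t0 <= t0 - d); [|lra].
          apply Hlub. intros s Es. apply Rnot_lt_le. intro Hlt. apply Hno. exists s; split; auto.
      }
      assert (t0 < t).
      { destruct Ht0t as [| ->]; [assumption|]. unfold eps in Hnear. lra. }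
      set (m := Rmin d (t - t0)).
      assert (0 < m) by (unfold m; apply Rmin_pos; lra).
      assert (m <= d) by apply Rmin_l.
      assert (m <= t - t0) by apply Rmin_r.
      exists (t0 + m / 2). split; [lra|].
      assert (HH : Rabs (h (t0 + m/2) - h t0) < eps) by (apply Hd1; rewrite Rabs_right; lra).
      apply Rabs_def2 in HH. unfold eps in *. lra.
    - destruct (Hr0 eps Heps) as [d [Hd0 Hd1]].
      set (m := Rmin d t).
      assert (0 < m) by (unfold m; apply Rmin_pos; lra).
      assert (m <= d) by apply Rmin_l.
      assert (m <= t) by apply Rmin_r.
      exists (m / 2). split; [lra|].
      assert (HH : Rabs (h (m/2) - h 0) < eps) by (apply Hd1; lra).
      apply Rabs_def2 in HH. unfold eps in *. lra. }
  destruct Hs' as [s' [[Hs1 Hs2] Hs3]].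
  assert (Hneg' : forall x, s' <= x <= t -> h x < 0).
  { intros x Hx. apply Rnot_le_lt. intro Hx0.
    assert (x <= t0) by (apply Hub; split; lra). lra. }
  destruct (MVT_gen h s' t h') as [c [Hc Heq]].
  - intros x Hx. rewrite Rmin_left in Hx by lra. rewrite Rmax_right in Hx by lra.
    apply Hd; lra.
  - intros x Hx. rewrite Rmin_left in Hx by lra. rewrite Rmax_right in Hx by lra.
    apply continuity_pt_filterlim. apply (ex_derive_continuous h x).
    exists (h' x). apply Hd. lra.
  - rewrite Rmin_left in Hc by lra. rewrite Rmax_right in Hc by lra.
    assert (0 <= h' c) by (apply Hpos; [lra| apply Hneg'; lra]).
    assert (0 <= h' c * (t - s')) by (apply Rmult_le_pos; lra).
    lra.
Qed.

Theorem theorem3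
  (p aL : R -> R) (A B C kappa vmax Dst Dsf Th : R) (D v vL : R -> R) :
  locally_lipschitz p -> (forall s, 0 <= p s) ->
  0 <= A -> 0 <= B -> C = 0 ->
  0 < kappa -> 0 < vmax -> 0 < Th ->
  closed_loop_solution p aL A B C kappa Dst vmax D v vL ->
  ( ( (forall t, 0 <= t -> 0 <= v t) /\ Dsf <= Dst /\ B = / Th /\ kappa <= / Th )
    \/
    ( exists vbar : R, 0 <= vbar /\
        (forall t, 0 <= t -> 0 <= v t <= vbar /\ 0 <= vL t <= vbar) /\
        Dsf < Dst /\ kappa <= / Th /\
        Rabs (/ Th - B) * vbar / (kappa * (Dst - Dsf)) <= A ) ) ->
  0 <= hTH Th Dsf (D 0) (v 0) ->
  forall t, 0 <= t -> 0 <= hTH Th Dsf (D t) (v t).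
Proof.
  intros _ Hp HA HB HC Hk Hvm HTh [HD [Hv [HvL [HD0 [Hv0 HvL0]]]]] Hcase H0.
  set (kb := / Th).
  assert (Hkb : 0 < kb) by (unfold kb; apply Rinv_0_lt_compat; lra).
  set (h := fun t => hTH Th Dsf (D t) (v t)).
  set (h' := fun t => minus (kb * minus (vL t - v t) zero)
     (kd A B C kappa Dst vmax (D t) (v t) (vL t) (aL t) - p (v t))).
  apply (barrier h h').
  - intros t Ht. unfold h, h', hTH. fold kb.
    apply (is_derive_minus (fun t => kb * (D t - Dsf)) v).
    + apply (is_derive_scal (fun t => D t - Dsf)).
      apply (is_derive_minus D (fun _ => Dsf)); [apply HD; lra| apply (@is_derive_const R_AbsRing R_NormedModule)].
    + apply Hv; lra.
  - intros t Ht Hh. unfold h, h', hTH in *. fold kb in Hh.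
    unfold minus, plus, opp, zero; simpl.
    unfold kd, Vpol, Wpol. subst C.
    set (Dt := D t) in *. set (vt := v t) in *. set (vLt := vL t) in *.
    assert (Hpv := Hp vt).
    assert (HV : Rmin (kappa * (Dt - Dst)) vmax <= kappa * (Dt - Dst)) by apply Rmin_l.
    assert (HW1 : Rmin vLt vmax <= vLt) by apply Rmin_l.
    assert (HW2 : Rmin vLt vmax <= vmax) by apply Rmin_r.
    assert (HW3 : Rmin vLt vmax = vLt \/ Rmin vLt vmax = vmax).
    { unfold Rmin; destruct (Rle_dec vLt vmax); auto. }
    set (V := Rmin (kappa * (Dt - Dst)) vmax) in *.
    set (W := Rmin vLt vmax) in *.
    clearbody V W.
    assert (Hkey : forall vv, 0 <= vv -> kb * (Dt - Dsf) - vv < 0 -> kappa <= kb ->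
               kappa * (Dt - Dsf) <= vv).
    { intros vv Hvv Hlt Hkk. destruct (Rle_lt_dec 0 (Dt - Dsf)).
      - assert (kappa * (Dt - Dsf) <= kb * (Dt - Dsf)) by (apply Rmult_le_compat_r; lra). lra.
      - assert (kappa * (Dt - Dsf) < 0) by nra. lra. }
    destruct Hcase as [[Hvpos [HDst [HBk Hkk]]] | [vbar [Hvb [Hbd [HDst [Hkk HAb]]]]]].
    + assert (0 <= vt) by (apply Hvpos; lra).
      assert (kappa * (Dt - Dsf) <= vt) by (apply Hkey; auto).
      assert (kappa * (Dt - Dst) <= kappa * (Dt - Dsf)) by (apply Rmult_le_compat_l; lra).
      assert (A * (V - vt) <= 0) by (apply Rmult_le_0_l; lra).
      rewrite HBk. fold kb.
      assert (kb * (vLt - W) >= 0) by (apply Rle_ge, Rmult_le_pos; lra).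
      lra.
    + destruct (Hbd t (Rlt_le _ _ Ht)) as [[Hv1 Hv2] [HL1 HL2]].
      change (v t) with vt in Hv1, Hv2. change (vL t) with vLt in HL1, HL2.
      assert (kappa * (Dt - Dsf) <= vt) by (apply Hkey; auto).
      assert (Hpos : 0 < kappa * (Dst - Dsf)) by (apply Rmult_lt_0_compat; lra).
      assert (HAk : Rabs (kb - B) * vbar <= A * (kappa * (Dst - Dsf))).
      { apply (Rmult_le_compat_r (kappa * (Dst - Dsf))) in HAb; [|lra].
        unfold Rdiv in HAb. rewrite Rmult_assoc, Rinv_l in HAb by lra. fold kb in HAb. lra. }
      assert (HVv : V - vt <= - (kappa * (Dst - Dsf))) by lra.
      assert (HA2 : A * (V - vt) <= - (A * (kappa * (Dst - Dsf)))).
      { apply (Rmult_le_compat_l A) in HVv; lra. }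
      assert (HWv : Rabs (W - vt) <= vbar).
      { apply Rabs_le. destruct HW3 as [E|E]; lra. }
      assert (HB2 : - (Rabs (kb - B) * vbar) <= (kb - B) * (W - vt)).
      { assert (Rabs ((kb - B) * (W - vt)) <= Rabs (kb - B) * vbar).
        { rewrite Rabs_mult. apply Rmult_le_compat_l; [apply Rabs_pos | exact HWv]. }
        assert (- Rabs ((kb - B) * (W - vt)) <= (kb - B) * (W - vt)).
        { pose proof (Rle_abs (- ((kb - B) * (W - vt)))) as HH. rewrite Rabs_Ropp in HH. lra. }
        lra. }
      assert (kb * (vLt - W) >= 0) by (apply Rle_ge, Rmult_le_pos; lra).
      nra.
  - intros eps He.
    assert (He1 : 0 < eps * Th / 2) by (apply Rmult_lt_0_compat; [nra|lra]).
    assert (He2 : 0 < eps / 2) by lra.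
    destruct (rcont_eps D HD0 _ He1) as [d1 [Hd1 Hd1']].
    destruct (rcont_eps v Hv0 _ He2) as [d2 [Hd2 Hd2']].
    exists (Rmin d1 d2). split; [apply Rmin_pos; lra|].
    intros s [Hs1 Hs2].
    assert (Hm1 := Rmin_l d1 d2). assert (Hm2 := Rmin_r d1 d2).
    assert (A1 := Hd1' s ltac:(lra)). assert (A2 := Hd2' s ltac:(lra)).
    unfold h, hTH.
    assert (Hi : 0 < / Th) by (apply Rinv_0_lt_compat; lra).
    replace (/ Th * (D s - Dsf) - v s - (/ Th * (D 0 - Dsf) - v 0))
      with (/ Th * (D s - D 0) - (v s - v 0)) by ring.
    eapply Rle_lt_trans; [apply Rabs_triang|]. rewrite Rabs_Ropp, Rabs_mult.
    rewrite (Rabs_right (/ Th)) by lra.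
    assert (/ Th * Rabs (D s - D 0) < / Th * (eps * Th / 2)) by (apply Rmult_lt_compat_l; lra).
    replace (/ Th * (eps * Th / 2)) with (eps / 2) in H by (field; lra).
    lra.
  - exact H0.
Qed.
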